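(* Let $F(x)=x^4+ax^3+bx+c\in\mathbb{Z}[x]$ be irreducible over $\mathbb{Q}$, $\alpha$ a root of $F$ and $K=\mathbb{Q}(\alpha)$. If any of the following holds: (1) $a\equiv1\pmod8$, $b\equiv3\pmod8$ and $c\equiv7\pmod8$; (2) $a\equiv5\pmod8$ and $b\equiv c\equiv3\pmod 8$ or $b\equiv c\equiv 7\pmod8$; (3) $a\equiv c\equiv7\pmod8$ and $b\equiv5\pmod8$; then $K$ is not monogenic.
   Context: $K$ is monogenic if its ring of integers $\mathcal{O}_K$ equals $\mathbb{Z}[\theta]$ for some $\theta\in\mathcal{O}_K$. *)

(* Defs.v *)
From mathcomp Require Import all_boot all_order all_algebra all_field.
Set Implicit Arguments. Unset Strict Implicit. Unset Printing Implicit Defensive.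
Import GRing.Theory Num.Theory.
Local Open Scope ring_scope.

(* Number field K = Q(alpha), realised inside the algebraic numbers algC:
   the elements p(alpha) with p a rational polynomial. *)
Definition in_Qadj (alpha x : algC) : Prop :=
  exists p : {poly rat}, x = (map_poly ratr p).[alpha].

Definition in_ring_of_integers (alpha x : algC) : Prop :=
  in_Qadj alpha x /\ x \in Aint.

Definition in_Zadj (theta x : algC) : Prop :=
  exists p : {poly int}, x = (map_poly intr p).[theta].

Definition monogenic (alpha : algC) : Prop :=
  exists theta : algC, in_ring_of_integers alpha theta /\
    forall x : algC, in_ring_of_integers alpha x <-> in_Zadj theta x.

(* Main.v *)
Require Import Defs.
From mathcomp Require Import all_boot all_order all_algebra all_field.
From mathcomp Require Import ring zify lra.
Import GRing.Theory Num.Theory.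
Local Open Scope ring_scope.

Lemma F2_cases (s : 'F_2) : s = 0 \/ s = 1.
Proof. by case: s => [[|[|n]] Hn] //=; [left|right]; apply/val_inj. Qed.

Lemma F2_noroot (s : 'F_2) : s ^+ 2 + s + 1 != 0.
Proof. by case: (F2_cases s) => ->. Qed.

Lemma F2_rootless (p P : {poly 'F_2}) : p %| P ^+ 2 + P + 1 -> forall r, ~~ root p r.
Proof.
move=> dv r; apply/negP => /(root_dvdp dv).
by rewrite /root !hornerE (negPf (F2_noroot _)).
Qed.

Lemma size2_root (p : {poly 'F_2}) : size p = 2 -> exists r, root p r.
Proof.
move=> sp.
have nz : p != 0 by rewrite -size_poly_eq0 sp.
have s4 : (size (p * p)%R <= 4)%N by rewrite (size_mul nz nz) sp.
have s13 : ((1 < size p)%N && (size p < size (p * p)%R)%N) by rewrite (size_mul nz nz) sp.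
have [r Hr] := reducible_cubic_root s4 s13 (dvdp_mulr p (dvdpp p)).
by exists r; move: Hr; rewrite /root hornerM mulf_eq0 orbb.
Qed.

Lemma size3_rootless (p : {poly 'F_2}) : size p = 3 -> (forall r, ~~ root p r) ->
  p = 'X^2 + 'X + 1.
Proof.
move=> sp nr.
have c2 : p`_2 = 1.
  have : p`_2 != 0.
    have e : lead_coef p = p`_2 by rewrite lead_coefE sp.
    by rewrite -e lead_coef_eq0 -size_poly_eq0 sp.
  by case: (F2_cases p`_2) => ->.
have c0 : p`_0 = 1.
  have := nr 0; rewrite /root horner_coef0.
  by case: (F2_cases p`_0) => ->.
have h1 : p.[1] = p`_0 + p`_1 + p`_2.
  by rewrite horner_coef sp !big_ord_recr big_ord0 /= !expr1n !mulr1 add0r.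
have c1 : p`_1 = 1.
  have := nr 1; rewrite /root h1 c0 c2.
  by case: (F2_cases p`_1) => ->.
apply/polyP => i.
case: i => [|[|[|i]]]; rewrite !coefE /= ?c0 ?c1 ?c2 ?addr0 ?add0r //.
by rewrite nth_default ?sp.
Qed.

Lemma dvdpB' (d m n : {poly 'F_2}) : d %| m -> d %| n -> d %| m - n.
Proof. by move=> ? ?; rewrite dvdp_add // -mulN1r dvdp_mull. Qed.

Lemma F2_final (M Y T : {poly 'F_2}) : M != 0 -> (size M <= 5)%N ->
  M %| Y * T -> M %| Y ^+ 2 + Y + T ^+ 2 + T + 1 ->
  ~~ (M %| Y) -> ~~ (M %| T) -> False.
Proof.
move=> M0 sM dYT drel nY nT.
set W := Y ^+ 2 + Y + 1.
have cYW : coprimep Y W.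
  apply/Bezout_coprimepP; exists (- (Y + 1), 1); rewrite /W.
  have -> : - (Y + 1) * Y + 1 * (Y ^+ 2 + Y + 1) = 1 by ring.
  exact: eqpxx.
have dYW : M %| Y * W.
  have -> : Y * W = Y * (Y ^+ 2 + Y + T ^+ 2 + T + 1) - (Y * T) * (T + 1) by rewrite /W; ring.
  by apply: dvdpB'; [apply: dvdp_mull | apply: dvdp_mulr].
set M1 := gcdp M Y; set M2 := gcdp M W.
have cM : coprimep M1 M2.
  apply: (coprimep_dvdl (dvdp_gcdr M W)); apply: (coprimep_dvdr (dvdp_gcdr M Y)).
  exact: cYW.
have dM : M1 * M2 %| M by rewrite Gauss_dvdp // dvdp_gcdl dvdp_gcdl.
have sM12 : (size (M1 * M2)%R <= 5)%N by apply: leq_trans sM; apply: dvdp_leq.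
have M10 : M1 != 0 by rewrite gcdp_eq0 negb_and M0.
have M20 : M2 != 0 by rewrite gcdp_eq0 negb_and M0.
move: sM12; rewrite size_mul //.
have s1 : (2 <= size M1)%N.
  rewrite ltnNge; apply/negP => s1.
  have : coprimep M Y.
    rewrite coprimep_def eqn_leq s1 /= lt0n size_poly_eq0 //.
  by move=> c; move: dYT; rewrite Gauss_dvdpr // (negPf nT).
have s2 : (2 <= size M2)%N.
  rewrite ltnNge; apply/negP => s2.
  have : coprimep M W.
    rewrite coprimep_def eqn_leq s2 /= lt0n size_poly_eq0 //.
  by move=> c; move: dYW; rewrite Gauss_dvdpl // (negPf nY).
have r1 : forall r, ~~ root M1 r.
  apply: (@F2_rootless _ T).
  have -> : T ^+ 2 + T + 1 = (Y ^+ 2 + Y + T ^+ 2 + T + 1) - Y * (Y + 1) by ring.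
  apply: dvdpB'; first exact: dvdp_trans (dvdp_gcdl M Y) drel.
  exact: dvdp_mulr (dvdp_gcdr M Y).
have r2 : forall r, ~~ root M2 r.
  apply: (@F2_rootless _ Y); exact: dvdp_gcdr.
have t1 : (3 <= size M1)%N.
  rewrite ltn_neqAle s1 andbT; apply/negP => /eqP e.
  by have [r] := size2_root _ (esym e); apply/negP.
have t2 : (3 <= size M2)%N.
  rewrite ltn_neqAle s2 andbT; apply/negP => /eqP e.
  by have [r] := size2_root _ (esym e); apply/negP.
move=> sz.
have e1 : size M1 = 3 by apply/eqP; rewrite eqn_leq t1 andbT; move: sz t2; clear; lia.
have e2 : size M2 = 3 by apply/eqP; rewrite eqn_leq t2 andbT; move: sz t1; clear; lia.
have q1 := size3_rootless _ e1 r1.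
have q2 := size3_rootless _ e2 r2.
move: cM; rewrite q1 q2 coprimepp.
by rewrite -q1 e1.
Qed.
Lemma two0 : (2%:R : 'F_2) = 0. Proof. by apply/val_inj. Qed.
Lemma one0 : (1 : 'F_2) != 0. Proof. by []. Qed.
Lemma natF2 (x : 'F_2) : ((x : nat)%:R : 'F_2) = x.
Proof. by case: x => [[|[|]]] // H; apply/val_inj. Qed.
Lemma intF2 (z : int) : (z%:~R : 'F_2) = ((z %% 2)%Z)%:~R.
Proof.
rewrite {1}(divz_eq z 2) rmorphD rmorphM /=.
have -> : ((2 : int)%:~R : 'F_2) = 0 by apply/val_inj.
by rewrite mulr0 add0r.
Qed.
Lemma intF2_odd (z : int) : (z %% 2 = 1)%Z -> (z%:~R : 'F_2) = 1.
Proof. by move=> h; rewrite intF2 h. Qed.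
Lemma intF2_even (z : int) : (z %% 2 = 0)%Z -> (z%:~R : 'F_2) = 0.
Proof. by move=> h; rewrite intF2 h. Qed.
Lemma intF2_0 (z : int) : (z%:~R : 'F_2) = 0 -> (z %% 2 = 0)%Z.
Proof.
rewrite intF2. have : (0 <= z %% 2 < 2)%Z by rewrite modz_ge0 // ltz_pmod.
case: (z %% 2)%Z => [[|[|n]]|n] //.
Qed.
Notation pQtoC := (map_poly (ratr : rat -> algC)).

Lemma minC_irr (FQ : {poly rat}) (x : algC) : irreducible_poly FQ -> FQ \is monic ->
  root (pQtoC FQ) x -> minCpoly x = pQtoC FQ.
Proof.
move=> [_ irr] mF rF.
have [p [Dp mp] dv] := minCpolyP x.
rewrite Dp; congr map_poly.
have dpF : p %| FQ by rewrite -dv.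
have sp : size p != 1%N.
  by have := size_minCpoly x; rewrite Dp size_map_poly; case: (size p) => [|[|]].
have := irr p sp dpF.
by rewrite eqp_monic // => /eqP.
Qed.

Lemma mod_eval (md q : {poly rat}) (d : algC) : root (pQtoC md) d ->
  (pQtoC (q %% md)).[d] = (pQtoC q).[d].
Proof.
move=> r; rewrite {2}(divp_eq q md) rmorphD rmorphM /= hornerD hornerM.
by rewrite (eqP r) mulr0 add0r.
Qed.

Lemma LA (d : algC) (p : {poly rat}) :
  (size (minCpoly (pQtoC p).[d]) <= size (minCpoly d))%N.
Proof.
have [md [Dmd mmd] dvd] := minCpolyP d.
set g := (pQtoC p).[d].
have [mg [Dmg mmg] dvg] := minCpolyP g.
have rd : root (pQtoC md) d by rewrite -Dmd root_minCpoly.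
rewrite Dmd Dmg !size_map_poly.
have md0 : md != 0 by apply: monic_neq0.
have := size_minCpoly d; rewrite Dmd size_map_poly.
case smd : (size md) => [//|k] _.
pose A : 'M[rat]_(k.+1, k) := \matrix_(i < k.+1) poly_rV ((p ^+ i) %% md).
have rK : (0 < \rank (kermx A))%N.
  by rewrite mxrank_ker subn_gt0 ltnS rank_leq_col.
have [i ni] : exists i, row i (kermx A) != 0.
  apply/existsP; apply: contraTT rK => /existsPn H.
  rewrite -eqn0Ngt mxrank_eq0; apply/eqP/row_matrixP => i.
  by rewrite row0; apply/eqP; rewrite -[_ == _]negbK H.
set u := row i (kermx A).
have uA : u *m A = 0 by apply/sub_kermxP; apply: row_sub.
have Cu : rVpoly u = \sum_(j < k.+1) u 0 j *: 'X^j.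
  rewrite {1}(row_sum_delta u) linear_sum; apply: eq_bigr => j _; rewrite linearZ /=; congr (_ *: _); exact: rVpoly_delta.
have C0 : rVpoly u != 0.
  apply/negP => /eqP H; move/negP: ni; apply; apply/eqP.
  by rewrite -/u -[u](@rVpolyK rat k.+1) H linear0.
have sC : (size (rVpoly u) <= k.+1)%N by apply: size_poly.
have rowA : forall j, rVpoly (row j A) = (p ^+ j) %% md.
  move=> j; rewrite rowK poly_rV_K //.
  have := ltn_modp (p ^+ j) md; rewrite md0 smd ltnS; exact.
have Z : \sum_(j < k.+1) u 0 j *: ((p ^+ j) %% md) = 0.
  transitivity (rVpoly (u *m A)); last by rewrite uA linear0.
  rewrite mulmx_sum_row linear_sum; apply: eq_bigr => j _.
  by rewrite linearZ /= rowA.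
have rC : root (pQtoC (rVpoly u)) g.
  apply/eqP; rewrite Cu.
  transitivity ((pQtoC (\sum_(j < k.+1) u 0 j *: ((p ^+ j) %% md))).[d]); last first.
    by rewrite Z rmorph0 horner0.
  rewrite !rmorph_sum !horner_sum; apply: eq_bigr => j _.
  rewrite /= -!mul_polyC !rmorphM /= !map_polyC !hornerCM mod_eval // rmorphXn /=.
  by rewrite map_polyX !horner_exp hornerX rmorphXn /= horner_exp.
rewrite dvg in rC.
by apply: leq_trans sC; apply: dvdp_leq.
Qed.
Notation pZtoC := (map_poly (intr : int -> algC)).
Notation rho := (map_poly (intr : int -> 'F_2)).

Lemma pQZ (r : {poly int}) : pQtoC (map_poly intr r) = pZtoC r.
Proof. by rewrite -map_poly_comp; apply: eq_map_poly => z /=; rewrite ratr_int. Qed.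

Lemma minZ (th : algC) : th \in Aint ->
  {mZ : {poly int} | minCpoly th = pZtoC mZ & mZ \is monic}.
Proof.
move=> A; have [mZ D] := floorpP A; exists mZ => //.
have := minCpoly_monic th; rewrite D !monicE lead_coef_map_inj //; last exact: intr_inj.
move/eqP => H; apply/eqP; apply: (@intr_inj algC); by rewrite H.
Qed.

Lemma C0 (th : algC) (mZ h : {poly int}) : minCpoly th = pZtoC mZ -> mZ \is monic ->
  (pZtoC h).[th] = 0 -> rho mZ %| rho h.
Proof.
move=> D mon hth.
have mZ0 : mZ != 0 by apply: monic_neq0.
set r := h %% mZ.
have Eh := Pdiv.IdomainMonic.divp_eq mon h.
have rm : (pZtoC mZ).[th] = 0 by rewrite -D; apply/eqP; exact: root_minCpoly.
have rr : (pZtoC r).[th] = 0.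
  move: hth; rewrite {1}Eh rmorphD rmorphM /= hornerD hornerM rm mulr0 add0r.
  by [].
have [p [Dp _] dv] := minCpolyP th.
have dr : p %| map_poly intr r by rewrite -dv pQZ /root rr.
have sp : size p = size mZ.
  rewrite -(size_map_poly (ratr : rat -> algC)) -Dp D size_map_inj_poly //.
  exact: intr_inj.
have r0 : r = 0.
  have : (map_poly intr r : {poly rat}) == 0.
    apply: contraT => nz; have := dvdp_leq nz dr.
    rewrite size_map_inj_poly //; last exact: intr_inj.
    by rewrite sp leqNgt ltn_modp mZ0.
  move=> /eqP rQ0.
  have : size (map_poly intr r : {poly rat}) = 0%N by rewrite rQ0 size_poly0.
  rewrite size_map_inj_poly //; try exact: intr_inj.
  by move/eqP; rewrite size_poly_eq0 => /eqP.
have E : rho h = rho (h %/ mZ) * rho mZ.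
  by rewrite {1}Eh -/r r0 addr0 rmorphM.
by rewrite E dvdp_mull // dvdpp.
Qed.

Lemma C1 (th : algC) (mZ h : {poly int}) : th \in Aint -> minCpoly th = pZtoC mZ ->
  rho mZ %| rho h -> (pZtoC h).[th] / 2 \in Aint.
Proof.
move=> A D /dvdpP [s Es].
have rm : (pZtoC mZ).[th] = 0 by rewrite -D; apply/eqP; exact: root_minCpoly.
pose s' := map_poly (fun x : 'F_2 => ((x : nat) : int)) s.
have rs : rho s' = s.
  apply/polyP => i; rewrite coef_map /= coef_map_id0 //.
  exact: natF2.
set d := h - s' * mZ.
have rd : rho d = 0 by rewrite rmorphB rmorphM /= rs Es subrr.
have ev : forall i, (d`_i %% 2 = 0)%Z.
  by move=> i; apply: intF2_0; have := congr1 (fun q : {poly 'F_2} => q`_i) rd; rewrite coef_map coef0.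
pose r := map_poly (fun z : int => (z %/ 2)%Z) d.
have Ed : d = 2%:P * r.
  apply/polyP => i; rewrite coefCM coef_map_id0 //.
  by rewrite {1}(divz_eq d`_i 2) ev addr0 mulrC.
have -> : (pZtoC h).[th] = 2 * (pZtoC r).[th].
  have -> : h = d + s' * mZ by rewrite /d subrK.
  rewrite Ed rmorphD !rmorphM /= hornerD !hornerM rm mulr0 addr0 map_polyC hornerC /=.
  by [].
rewrite [2 * _]mulrC mulfK ?pnatr_eq0 //.
apply: rpred_horner => //; apply/polyOverP => i; rewrite coef_map /=.
exact: Aint_int.
Qed.

Lemma NI (b : algC) (P : {poly rat}) : b \in Aint -> P \is monic ->
  root (pQtoC P) b -> size (minCpoly b) = size P -> forall i, P`_i \is a Num.int.
Proof.
move=> A mP rP sb i.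
have [p [Dp mp] dv] := minCpolyP b.
have dp : p %| P by rewrite -dv.
have : p %= P by rewrite -dvdp_size_eqp // -(size_map_poly (ratr : rat -> algC)) -Dp sb.
rewrite eqp_monic // => /eqP ep.
have := A; rewrite unfold_in Dp ep => /polyOverP /(_ i).
by rewrite coef_map /= Cint_rat.
Qed.

Lemma F_Poly (R : nzRingType) (a b c : R) :
  'X^4 + a%:P * 'X^3 + b%:P * 'X + c%:P = Poly [:: c; b; 0; a; 1].
Proof.
apply/polyP => i; rewrite coef_Poly !coefD !coefCM !coefXn coefX coefC.
case: i => [|[|[|[|[|i]]]]] /=; rewrite ?mulr0 ?mulr1 ?addr0 ?add0r //.
by rewrite nth_default.
Qed.

Lemma NI4 (x : algC) (c0 c1 c2 c3 : rat) : x \in Aint -> size (minCpoly x) = 5%N ->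
  x ^+ 4 + ratr c3 * x ^+ 3 + ratr c2 * x ^+ 2 + ratr c1 * x + ratr c0 = 0 ->
  [/\ c0 \is a Num.int, c1 \is a Num.int, c2 \is a Num.int & c3 \is a Num.int].
Proof.
move=> A sx ex.
set P := Poly [:: c0; c1; c2; c3; 1].
have eP : (P : seq rat) = [:: c0; c1; c2; c3; 1] by rewrite (@PolyK _ 1) //= oner_eq0.
have mP : P \is monic by rewrite monicE lead_coefE eP.
have rP : root (pQtoC P) x.
  rewrite /root map_Poly /= !horner_cons hornerC rmorph1; apply/eqP; rewrite -[RHS]ex; ring.
have sP : size (minCpoly x) = size P by rewrite sx eP.
have H := NI _ _ A mP rP sP.
by split; [have := H 0%N | have := H 1%N | have := H 2%N | have := H 3%N]; rewrite eP.
Qed.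

Lemma inQ_X d : in_Qadj d d.
Proof. by exists 'X; rewrite map_polyX hornerX. Qed.
Lemma inQ_rat d (r : rat) : in_Qadj d (ratr r).
Proof. by exists r%:P; rewrite map_polyC hornerC. Qed.
Lemma inQ_int d (z : int) : in_Qadj d z%:~R.
Proof. by rewrite -(ratr_int _ z); apply: inQ_rat. Qed.
Lemma inQ_add d x y : in_Qadj d x -> in_Qadj d y -> in_Qadj d (x + y).
Proof. by move=> [p ->] [q ->]; exists (p + q); rewrite rmorphD hornerD. Qed.
Lemma inQ_mul d x y : in_Qadj d x -> in_Qadj d y -> in_Qadj d (x * y).
Proof. by move=> [p ->] [q ->]; exists (p * q); rewrite rmorphM hornerM. Qed.
Lemma inQ_opp d x : in_Qadj d x -> in_Qadj d (- x).
Proof. by move=> [p ->]; exists (- p); rewrite rmorphN hornerN. Qed.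
Lemma inQ_sub d x y : in_Qadj d x -> in_Qadj d y -> in_Qadj d (x - y).
Proof. by move=> ? ?; apply: inQ_add => //; apply: inQ_opp. Qed.
Lemma inQ_exp d x n : in_Qadj d x -> in_Qadj d (x ^+ n).
Proof. by move=> [p ->]; exists (p ^+ n); rewrite rmorphXn horner_exp. Qed.
Lemma inQ_invint d (z : int) : in_Qadj d (z%:~R)^-1.
Proof. by rewrite -(ratr_int _ z) -fmorphV; apply: inQ_rat. Qed.
Lemma inQ_nat d (n : nat) : in_Qadj d n%:R.
Proof. by rewrite -(ratr_nat _ n); apply: inQ_rat. Qed.
Lemma inQ_invnat d (n : nat) : in_Qadj d (n%:R)^-1.
Proof. by rewrite -(ratr_nat _ n) -fmorphV; apply: inQ_rat. Qed.

Lemma inQ_1 d : in_Qadj d 1.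
Proof. by rewrite -(rmorph1 (ratr : rat -> algC)); apply: inQ_rat. Qed.

Ltac inQ := repeat first [ apply: inQ_X | apply: inQ_1 | apply: inQ_int | apply: inQ_invint | apply: inQ_nat
  | apply: inQ_invnat | apply: inQ_add | apply: inQ_sub | apply: inQ_mul | apply: inQ_opp
  | apply: inQ_exp ].

Lemma LAQ d x : in_Qadj d x -> (size (minCpoly x) <= size (minCpoly d))%N.
Proof. by move=> [p ->]; apply: LA. Qed.
Lemma par (a b c : int) :
  ([/\ (a = 1 %[mod 8])%Z, (b = 3 %[mod 8])%Z & (c = 7 %[mod 8])%Z]
   \/ ((a = 5 %[mod 8])%Z /\
       (((b = 3 %[mod 8])%Z /\ (c = 3 %[mod 8])%Z) \/
        ((b = 7 %[mod 8])%Z /\ (c = 7 %[mod 8])%Z)))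
   \/ [/\ (a = 7 %[mod 8])%Z, (c = 7 %[mod 8])%Z & (b = 5 %[mod 8])%Z]) ->
  exists a1 u v : int, [/\ a = 2 * a1 + 1, b = 2 * u - 3 * a - 4, c = 4 * v - 1 - a - b,
     (u %% 2 = 1)%Z & (v %% 2 = 1)%Z].
Proof.
move=> H.
exists ((a - 1) %/ 2)%Z, ((3 * a + b + 4) %/ 2)%Z, ((1 + a + b + c) %/ 4)%Z.
case: H => [[h1 h2 h3]|[[h1 [[h2 h3]|[h2 h3]]]|[h1 h2 h3]]]; split; lia.
Qed.
Lemma odd_mul (x y : int) : (x %% 2 = 1)%Z -> (y %% 2 = 1)%Z -> ((x * y) %% 2 = 1)%Z.
Proof. by move=> hx hy; rewrite -modzMml -modzMmr hx hy. Qed.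
Lemma par2 (a a1 u v : int) : a = 2 * a1 + 1 -> (u %% 2 = 1)%Z -> (v %% 2 = 1)%Z ->
  [/\ ((2 * v) %% 2 = 0)%Z, ((3 * a + 6) %% 2 = 1)%Z, ((a + 4) %% 2 = 1)%Z & ((- u) %% 2 = 1)%Z].
Proof. move=> ha hu hv; split; lia. Qed.

Lemma szQ (p : {poly int}) : size (map_poly intr p : {poly rat}) = size p.
Proof. apply: size_map_inj_poly; [exact: intr_inj | exact: mulr0z]. Qed.

Lemma half_notint (z : int) : (z %% 2 = 1)%Z -> ~ ((z%:~R / 2 : rat) \is a Num.int).
Proof.
move=> hz /intrP [m hm].
have : z%:~R = (2 * m)%:~R :> rat.
  by rewrite rmorphM /= -hm mulrC mulfVK // pnatr_eq0.
move/(@intr_inj rat) => e; move: hz; rewrite e; lia.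
Qed.

Lemma Aint_Fpoly (a b c : int) (x : algC) :
  root (pZtoC ('X^4 + a%:P * 'X^3 + b%:P * 'X + c%:P)) x -> x \in Aint.
Proof.
move=> r; apply: (root_monic_Aint r).
  by apply: monic_map; rewrite F_Poly monicE lead_coefE (@PolyK _ 1) //= oner_eq0.
by apply/polyOverP => i; rewrite coef_map /= intr_int.
Qed.

Lemma Aint_quartic (x : algC) (c0 c1 c2 c3 : int) :
  x ^+ 4 + c3%:~R * x ^+ 3 + c2%:~R * x ^+ 2 + c1%:~R * x + c0%:~R = 0 -> x \in Aint.
Proof.
move=> e.
set P : {poly int} := Poly [:: c0; c1; c2; c3; 1].
have eP : (P : seq int) = [:: c0; c1; c2; c3; 1] by rewrite (@PolyK _ 1) //= oner_eq0.
have r : root (pZtoC P) x.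
  rewrite /root map_Poly /= !horner_cons hornerC rmorph1; apply/eqP; rewrite -[RHS]e; ring.
apply: (root_monic_Aint r).
  by apply: monic_map; rewrite monicE lead_coefE eP.
by apply/polyOverP => i; rewrite coef_map /= intr_int.
Qed.

Lemma rho_rel (hy ht : {poly int}) (k1 k2 k3 k4 : int) :
  (k1 %% 2 = 1)%Z -> (k2 %% 2 = 1)%Z -> (k3 %% 2 = 1)%Z -> (k4 %% 2 = 1)%Z ->
  rho (ht ^+ 2 - k1%:P * ht + k2%:P + k3%:P * hy ^+ 2 + k4%:P * hy) =
  rho hy ^+ 2 + rho hy + rho ht ^+ 2 + rho ht + 1.
Proof.
move=> h1 h2 h3 h4.
rewrite !(rmorphD, rmorphB, rmorphN, rmorphM, rmorphXn) /= !map_polyC /=.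
rewrite (intF2_odd k1) // (intF2_odd k2) // (intF2_odd k3) // (intF2_odd k4) // !mul1r.
have -> : rho ht ^+ 2 - rho ht + 1 + rho hy ^+ 2 + rho hy =
  (rho hy ^+ 2 + rho hy + rho ht ^+ 2 + rho ht + 1) - rho ht * 2%:R by ring.
by rewrite -polyC_natr two0 mulr0 subr0.
Qed.

Lemma rho_prod (hy ht : {poly int}) (k : int) : (k %% 2 = 0)%Z ->
  rho (hy * ht + k%:P) = rho hy * rho ht.
Proof.
by move=> hk; rewrite rmorphD rmorphM /= map_polyC /= (intF2_even k) // addr0.
Qed.

Theorem corollary2p2 (a b c : int) (alpha : algC) :
  let F : {poly int} := 'X^4 + a%:P * 'X^3 + b%:P * 'X + c%:P in
  irreducible_poly (map_poly intr F : {poly rat}) ->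
  root (map_poly intr F) alpha ->
  ([/\ (a = 1 %[mod 8])%Z, (b = 3 %[mod 8])%Z & (c = 7 %[mod 8])%Z]
   \/ ((a = 5 %[mod 8])%Z /\
       (((b = 3 %[mod 8])%Z /\ (c = 3 %[mod 8])%Z) \/
        ((b = 7 %[mod 8])%Z /\ (c = 7 %[mod 8])%Z)))
   \/ [/\ (a = 7 %[mod 8])%Z, (c = 7 %[mod 8])%Z & (b = 5 %[mod 8])%Z]) ->
  ~ monogenic alpha.
Proof.
move=> F Firr Froot H.
have alA : alpha \in Aint by exact: (Aint_Fpoly _ _ _ _ Froot).
have sal : size (minCpoly alpha) = 5%N.
  have mF : (map_poly intr F : {poly rat}) \is monic.
    by apply: monic_map; rewrite /F F_Poly monicE lead_coefE (@PolyK _ 1) //= oner_eq0.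
  rewrite (minC_irr _ _ Firr mF); last by rewrite pQZ.
  rewrite size_map_poly szQ.
  by rewrite /F F_Poly (@PolyK _ 1) //= oner_eq0.
have [a1 [u [v [ha hb hc hu hv]]]] := par a b c H.
have [p2v p3a pa4 pmu] := par2 a a1 u v ha hu hv.
set A : algC := a%:~R; set U : algC := u%:~R; set V : algC := v%:~R.
set y := alpha - 1.
have E0 : y ^+ 4 + (A + 4) * y ^+ 3 + (3 * A + 6) * y ^+ 2 + 2 * U * y + 4 * V = 0.
  move: Froot; rewrite /root /F F_Poly map_Poly /= !horner_cons hornerC.
  rewrite hc hb !rmorphB !rmorphD !rmorphM /= -/A -/U -/V => /eqP <-.
  by rewrite /y; ring.
have V0 : V != 0.
  rewrite /V intr_eq0; apply/eqP => v0; move: hv; rewrite v0; done.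
have y0 : y != 0.
  apply/eqP => y0; move: E0; rewrite y0 !expr0n /= !mulr0 !add0r => /eqP.
  by rewrite mulf_eq0 (negPf V0) pnatr_eq0.
set t := (y ^+ 3 + (A + 4) * y ^+ 2 + (3 * A + 6) * y) / 2 + U.
have E1 : y * t = - (2 * V).
  apply/eqP; rewrite -subr_eq0; apply/eqP.
  transitivity ((y ^+ 4 + (A + 4) * y ^+ 3 + (3 * A + 6) * y ^+ 2 + 2 * U * y + 4 * V) / 2).
    by rewrite /t; field.
  by rewrite E0 mul0r.
have E2 : t ^+ 2 - U * t + V * (3 * A + 6) + V * y ^+ 2 + V * (A + 4) * y = 0.
  have H2 : y ^+ 2 * (t ^+ 2 - U * t + V * (3 * A + 6) + V * y ^+ 2 + V * (A + 4) * y) =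
     (y * t) ^+ 2 - U * (y * t) * y + V * (3 * A + 6) * y ^+ 2 + V * y ^+ 4 + V * (A + 4) * y ^+ 3.
    by ring.
  rewrite E1 in H2.
  have : y ^+ 2 * (t ^+ 2 - U * t + V * (3 * A + 6) + V * y ^+ 2 + V * (A + 4) * y) = 0.
    rewrite H2; transitivity (V * (y ^+ 4 + (A + 4) * y ^+ 3 + (3 * A + 6) * y ^+ 2 + 2 * U * y + 4 * V)).
      by ring.
    by rewrite E0 mulr0.
  by move/eqP; rewrite mulf_eq0 expf_eq0 (negPf y0) andbF /= => /eqP.
have Et : t ^+ 4 - U * t ^+ 3 + V * (3 * A + 6) * t ^+ 2 - 2 * V ^+ 2 * (A + 4) * t + 4 * V ^+ 3 = 0.
  have H3 : t ^+ 4 * (y ^+ 4 + (A + 4) * y ^+ 3 + (3 * A + 6) * y ^+ 2 + 2 * U * y + 4 * V) =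
    (y * t) ^+ 4 + (A + 4) * (y * t) ^+ 3 * t + (3 * A + 6) * (y * t) ^+ 2 * t ^+ 2
    + 2 * U * (y * t) * t ^+ 3 + 4 * V * t ^+ 4 by ring.
  rewrite E1 E0 mulr0 in H3.
  have : (4 * V) * (t ^+ 4 - U * t ^+ 3 + V * (3 * A + 6) * t ^+ 2 - 2 * V ^+ 2 * (A + 4) * t + 4 * V ^+ 3) = 0.
    rewrite H3; ring.
  by move/eqP; rewrite mulf_eq0 mulf_eq0 (negPf V0) pnatr_eq0 /= => /eqP.
have tA : t \in Aint.
  apply: (Aint_quartic _ (4 * v ^+ 3) (- (2 * v ^+ 2 * (a + 4))) (v * (3 * a + 6)) (- u)).
  rewrite -[RHS]Et ?(rmorphM, rmorphN, rmorphXn, rmorphD, rmorphB) /= -/A -/U -/V; ring.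
have yA : y \in Aint by rewrite /y rpredB // rpred1.
set s := t / 2.
have Es : s ^+ 4 + ratr ((- u)%:~R / 2) * s ^+ 3 + ratr ((v * (3 * a + 6))%:~R / 4) * s ^+ 2
    + ratr ((- (v ^+ 2 * (a + 4)))%:~R / 4) * s + ratr ((v ^+ 3)%:~R / 4) = 0.
  rewrite !rmorphM /= !fmorphV /= !ratr_int !ratr_nat ?(rmorphM, rmorphN, rmorphXn, rmorphD) /= -/A -/U -/V.
  transitivity ((t ^+ 4 - U * t ^+ 3 + V * (3 * A + 6) * t ^+ 2 - 2 * V ^+ 2 * (A + 4) * t + 4 * V ^+ 3) / 16).
    by rewrite /s; field.
  by rewrite Et mul0r.
have Er : (y / 2) ^+ 4 + ratr ((a + 4)%:~R / 2) * (y / 2) ^+ 3 + ratr ((3 * a + 6)%:~R / 4) * (y / 2) ^+ 2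
    + ratr (u%:~R / 4) * (y / 2) + ratr (v%:~R / 4) = 0.
  rewrite !rmorphM /= !fmorphV /= !ratr_int !ratr_nat ?(rmorphM, rmorphD) /= -/A -/U -/V.
  transitivity ((y ^+ 4 + (A + 4) * y ^+ 3 + (3 * A + 6) * y ^+ 2 + 2 * U * y + 4 * V) / 16).
    by field.
  by rewrite E0 mul0r.
have s0 : s != 0.
  apply/eqP => s0; move: E1; rewrite (_ : t = 2 * s); last by rewrite /s; field.
  rewrite s0 mulr0 mulr0 => /eqP; rewrite eq_sym oppr_eq0 mulf_eq0 (negPf V0) pnatr_eq0 //.
have ys : y = 4 * V^-1 * V^-1 * (s ^+ 3 - U / 2 * s ^+ 2 + V * (3 * A + 6) / 4 * s - V * V * (A + 4) / 4).
  apply/eqP; rewrite -subr_eq0; apply/eqP.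
  have : s * (y - 4 * V^-1 * V^-1 * (s ^+ 3 - U / 2 * s ^+ 2 + V * (3 * A + 6) / 4 * s - V * V * (A + 4) / 4)) = 0.
    transitivity ((y * t + 2 * V) / 2 - (t ^+ 4 - U * t ^+ 3 + V * (3 * A + 6) * t ^+ 2 - 2 * V ^+ 2 * (A + 4) * t + 4 * V ^+ 3) / (4 * V ^+ 2)).
      by rewrite /s; field.
    by rewrite Et E1 addNr !mul0r subr0.
  by move/eqP; rewrite mulf_eq0 (negPf s0) /= => /eqP.
have sy2 : size (minCpoly (y / 2)) = 5%N.
  apply/eqP; rewrite eqn_leq -{1}sal; apply/andP; split.
    by apply: LAQ; rewrite /y; inQ.
  rewrite -sal; apply: LAQ.
  have -> : alpha = 2 * (y / 2) + 1 by rewrite /y; field.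
  inQ.
have ss : size (minCpoly s) = 5%N.
  apply/eqP; rewrite eqn_leq -{1}sal; apply/andP; split.
    by apply: LAQ; rewrite /s /t /y; inQ.
  rewrite -sal; apply: LAQ.
  have -> : alpha = y + 1 by rewrite /y subrK.
  rewrite ys; inQ.
move=> [th [[thQ thA] Hth]].
have [hy ey] : in_Zadj th y by apply/Hth; split => //; rewrite /y; inQ.
have [ht et] : in_Zadj th t by apply/Hth; split => //; rewrite /t /y; inQ.
have [mZ Dm mon] := minZ th thA.
set M := rho mZ; set Y := rho hy; set T := rho ht.
have M0 : M != 0 by apply: monic_neq0; apply: monic_map.
have sM : (size M <= 5)%N.
  rewrite /M size_map_poly_id0; last by rewrite (monicP mon) rmorph1 oner_eq0.
  have -> : size mZ = size (minCpoly th).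
    by rewrite Dm; apply/esym/size_map_inj_poly; [exact: intr_inj | exact: mulr0z].
  by rewrite -sal; apply: LAQ.
have dYT : M %| Y * T.
  have h0 : (pZtoC (hy * ht + (2 * v)%:P)).[th] = 0.
    rewrite rmorphD rmorphM /= map_polyC hornerD hornerM hornerC -ey -et E1.
    by rewrite /= intrM -/V; ring.
  have := C0 th mZ _ Dm mon h0.
  by rewrite rho_prod.
have drel : M %| Y ^+ 2 + Y + T ^+ 2 + T + 1.
  have h0 : (pZtoC (ht ^+ 2 - u%:P * ht + (v * (3 * a + 6))%:P + v%:P * hy ^+ 2
     + (v * (a + 4))%:P * hy)).[th] = 0.
    rewrite !(rmorphD, rmorphB, rmorphN, rmorphM, rmorphXn) /= !map_polyC /=.
    rewrite !(hornerD, hornerN, hornerM, hornerC, horner_exp) -ey -et.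
    rewrite /= ?(intrM, intrD) -/A -/U -/V -[RHS]E2; ring.
  have := C0 th mZ _ Dm mon h0.
  by rewrite rho_rel //; exact: odd_mul.
have nY : ~~ (M %| Y).
  apply/negP => dv; have := C1 th mZ hy thA Dm dv; rewrite -ey => y2A.
  have [_ _ _ c3] := NI4 _ _ _ _ _ y2A sy2 Er.
  exact: (half_notint (a + 4)).
have nT : ~~ (M %| T).
  apply/negP => dv; have := C1 th mZ ht thA Dm dv; rewrite -et => sA.
  have [_ _ _ c3] := NI4 _ _ _ _ _ sA ss Es.
  exact: (half_notint (- u)).
exact: F2_final M Y T M0 sM dYT drel nY nT.
Qed.
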